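(* For every odd integer $\Delta \ge 1$ there is a local algorithm that, on every graph $\mathcal{G}=(V,E)$ without isolated nodes, of maximum degree at most $\Delta$, equipped with a port numbering and an orientation (and no colouring, no identifiers), outputs a dominating set $D$ with $|D| \le \Delta\,|D^*|$, where $D^*$ is a minimum dominating set of $\mathcal{G}$.
   Context: Model: a graph $\mathcal{G}=(V,E)$ without isolated nodes is a distributed system; every node runs the same deterministic algorithm. Communication is synchronous: in each round every node receives messages from its neighbours, performs local computation, and sends messages to its neighbours. Each node knows its degree and the global degree bound $\Delta$. A local algorithm is one that terminates after $T$ rounds, where $T$ may depend on $\Delta$ but not on the number of nodes; its output at a node is whether the node belongs to the solution. A port numbering means each node has a fixed ordering of its incident edges, known to it; nodes have no identifiers. An orientation chooses for each edge $\{u,v\}$ exactly one direction, and each node knows which of its incident edges are outgoing and which are incoming. *)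

(* Defs.v *)
From mathcomp Require Import all_boot.
Set Implicit Arguments. Unset Strict Implicit. Unset Printing Implicit Defensive.

(* A port-numbered, oriented simple graph on a finite vertex type V:
   - adj : symmetric irreflexive adjacency relation;
   - ports v : the neighbours of v listed in port order (port i of v leads to
     nth v (ports v) i); duplicate-free and listing exactly the neighbours;
   - out u v : the edge {u,v} is oriented from u to v. *)
Record pn_graph (V : finType) := PNGraph {
  adj : rel V;
  ports : V -> seq V;
  out : V -> V -> bool
}.

Definition wf_pn_graph (V : finType) (G : pn_graph V) (Delta : nat) : Prop :=
  (forall u v, adj G u v = adj G v u) /\
  (forall v, ~~ adj G v v) /\
  (forall v, uniq (ports G v)) /\
  (forall u v, (u \in ports G v) = adj G v u) /\
  (forall u v, adj G u v -> out G u v = ~~ out G v u) /\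
  (forall v, 0 < size (ports G v)) /\
  (forall v, size (ports G v) <= Delta).

(* A deterministic synchronous anonymous message-passing algorithm running
   for a fixed number of rounds.  Initially a node knows its degree and, for
   each of its ports, whether the incident edge is outgoing (the list
   [la_init] receives has one boolean per port, so its size is the degree).
   In each round, every node sends [la_send s i] on port i, then updates its
   state from its old state and the list of received messages (indexed by
   port). *)
Record local_alg := LocalAlg {
  la_state : Type;
  la_msg : Type;
  la_init : seq bool -> la_state;
  la_send : la_state -> nat -> la_msg;
  la_update : la_state -> seq la_msg -> la_state;
  la_output : la_state -> bool;
  la_rounds : nat
}.

Fixpoint run (A : local_alg) (V : finType) (G : pn_graph V) (t : nat)
  : V -> la_state A :=
  match t with
  | 0 => fun v => @la_init A [seq out G v u | u <- ports G v]
  | t'.+1 => fun v =>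
      let st := run A G t' in
      @la_update A (st v)
        [seq @la_send A (st u) (index v (ports G u)) | u <- ports G v]
  end.

Definition alg_output (A : local_alg) (V : finType) (G : pn_graph V) : {set V} :=
  [set v | @la_output A (run A G (la_rounds A) v)].

Definition dominating (V : finType) (G : pn_graph V) (D : {set V}) : Prop :=
  forall v, v \in D \/ exists2 u, u \in D & adj G v u.

Definition min_dominating (V : finType) (G : pn_graph V) (D : {set V}) : Prop :=
  dominating G D /\ forall D', dominating G D' -> #|D| <= #|D'|.

(* Main.v *)
Require Import Defs.
From mathcomp Require Import all_boot.
Set Implicit Arguments. Unset Strict Implicit. Unset Printing Implicit Defensive.

Section Alg.
Variable Delta : nat.

Definition isH (bs : seq bool) := size bs == Delta.
Definition isB (bs : seq bool) := isH bs && (size bs < 2 * count id bs).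
Definition isA (bs : seq bool) := isH bs && ~~ isB bs.
Definition fH (bs : seq bool) (nbs : seq (seq bool)) :=
  isH bs && ~~ (isA bs && has (fun p : bool * seq bool => ~~ p.1 && isB p.2) (zip bs nbs)).

Definition st := (seq bool * bool * bool)%type.
Definition upd (s : st) (ms : seq st) : st :=
  let bs := s.1.1 in
  (bs, fH bs [seq m.1.1 | m <- ms],
   if isH bs then s.1.2 else ~~ has id [seq m.1.2 | m <- ms]).

Definition Alg : local_alg :=
  @LocalAlg st st (fun bs => (bs, false, false)) (fun s _ => s) upd
    (fun s => s.2) 2.

Variables (V : finType) (G : pn_graph V).

Definition bsv v := [seq out G v u | u <- ports G v].
Definition Hn v := size (ports G v) == Delta.
Definition Bn v := Hn v && (size (ports G v) < 2 * count (out G v) (ports G v)).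
Definition An v := Hn v && ~~ Bn v.
Definition XA v := An v && has (fun u => ~~ out G v u && Bn u) (ports G v).
Definition DH v := Hn v && ~~ XA v.
Definition Dn v := if Hn v then DH v else ~~ has DH (ports G v).

Lemma isH_bsv v : isH (bsv v) = Hn v.
Proof. by rewrite /isH /Hn size_map. Qed.
Lemma isB_bsv v : isB (bsv v) = Bn v.
Proof. by rewrite /isB /Bn isH_bsv size_map count_map. Qed.
Lemma isA_bsv v : isA (bsv v) = An v.
Proof. by rewrite /isA /An isH_bsv isB_bsv. Qed.

Lemma run0 v : run Alg G 0 v = (bsv v, false, false).
Proof. by []. Qed.

Lemma fH_bsv v : fH (bsv v) [seq bsv u | u <- ports G v] = DH v.
Proof.
rewrite /fH /DH /XA isH_bsv isA_bsv. congr (_ && ~~ (_ && _)).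
rewrite /bsv zip_map has_map. apply: eq_has => u /=. by rewrite isB_bsv.
Qed.

Lemma run1 v : (run Alg G 1 v).1 = (bsv v, DH v).
Proof.
rewrite /= /upd /= -!map_comp /=. by rewrite -/(bsv v) fH_bsv.
Qed.

Lemma run2 v : run Alg G 2 v = (bsv v, DH v, Dn v).
Proof.
have -> : run Alg G 2 v = upd (run Alg G 1 v)
   [seq run Alg G 1 u | u <- ports G v] by [].
have R : forall u, run Alg G 1 u = (bsv u, DH u, (run Alg G 1 u).2).
  by move=> u; have := run1 u; case: (run Alg G 1 u) => [[a b] c] /= [-> ->].
rewrite R.
have -> : [seq run Alg G 1 u | u <- ports G v] = [seq (bsv u, DH u, (run Alg G 1 u).2) | u <- ports G v].
  by apply: eq_map => u; rewrite {1}R.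
rewrite /upd -!map_comp /=.
rewrite isH_bsv /Dn has_map. congr (_,_,_).
have -> : [seq (fun x => (bsv x, DH x, (run Alg G 1 x).2).1.1) u | u <- ports G v] = [seq bsv u | u <- ports G v] by [].
by rewrite fH_bsv.
Qed.

Lemma alg_outputE : alg_output Alg G = [set v | Dn v].
Proof. by apply/setP => v; rewrite !inE run2. Qed.


Hypothesis hodd : odd Delta.
Hypothesis wf : wf_pn_graph G Delta.

Lemma adj_sym u v : adj G u v = adj G v u.
Proof. by case: wf. Qed.
Lemma mem_ports u v : (u \in ports G v) = adj G v u.
Proof. by case: wf => _ [_ [_ [H _]]]. Qed.
Lemma uniq_ports v : uniq (ports G v).
Proof. by case: wf => _ [_ [H _]]. Qed.
Lemma out_anti u v : adj G u v -> out G u v = ~~ out G v u.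
Proof. by case: wf => _ [_ [_ [_ [H _]]]]; apply: H. Qed.
Lemma size_ports v : size (ports G v) <= Delta.
Proof. by case: wf => _ [_ [_ [_ [_ [_ H]]]]]. Qed.

Lemma Bn_DH u : Bn u -> DH u.
Proof. move=> Bu; rewrite /DH /XA /An Bu /=; case/andP: Bu => -> _; by rewrite andbF. Qed.

Lemma Bn_Dn u : Bn u -> Dn u.
Proof. move=> Bu; have := Bn_DH Bu; rewrite /Dn; by case/andP: Bu => ->. Qed.

Lemma dom : dominating G [set v | Dn v].
Proof.
move=> v; rewrite !inE.
case Dv: (Dn v); first by left.
right. move: Dv; rewrite /Dn. case Hv: (Hn v).
- rewrite /DH Hv /= /XA; move/negbFE => /andP [_ /hasP [u uin /andP [_ Bu]]].
  exists u; last by rewrite -mem_ports.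
  rewrite inE; exact: Bn_Dn.
- move/negbFE => /hasP [u uin Du]. exists u; last by rewrite -mem_ports.
  have : Dn u by rewrite /Dn; case/andP: (Du) => ->.
  by rewrite inE.
Qed.


Definition g (u v : V) : nat :=
  if Hn u && Hn v then
    [|| Bn u && ~~ out G u v, An u && out G u v | An u && Bn v && out G v u]
  else if Hn v then ~~ Dn u else if Hn u then Dn v else false.

Definition infl v := \sum_(u <- ports G v) g u v.
Definition outfl v := \sum_(u <- ports G v) g v u.
Definition NH v := Hn v || has Hn (ports G v).

Lemma count_le_sum (s : seq V) (F : V -> nat) (P : pred V) :
  (forall u, u \in s -> P u -> 0 < F u) -> count P s <= \sum_(u <- s) F u.
Proof.
elim: s => [|x s IH] H; first by rewrite big_nil.
rewrite big_cons /=. apply: leq_add; last by apply: IH => u us; apply: H; rewrite inE us orbT.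
case Px: (P x) => //. by apply: H; rewrite ?inE ?eqxx.
Qed.

Lemma sum_le_count (s : seq V) (F : V -> nat) (P : pred V) :
  (forall u, u \in s -> F u <= P u) -> \sum_(u <- s) F u <= count P s.
Proof.
elim: s => [|x s IH] H; first by rewrite big_nil.
rewrite big_cons /=. apply: leq_add; last by apply: IH => u us; apply: H; rewrite inE us orbT.
by apply: H; rewrite inE eqxx.
Qed.

Lemma g_le1 u v : g u v <= 1.
Proof. rewrite /g. by case: ifP => _; [|case: ifP => _; [|case: ifP => _]]; rewrite ?leq_b1. Qed.

Lemma outfl_le v : outfl v <= Delta.
Proof.
apply: leq_trans (size_ports v). rewrite -(count_predT (ports G v)).
by apply: sum_le_count => u _; rewrite g_le1.
Qed.

Lemma DH_notDn u v : u \in ports G v -> DH v -> ~~ Hn u -> Dn u = false.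
Proof.
move=> uin Dv Hu. rewrite /Dn (negbTE Hu). apply/negbF/hasP; exists v => //.
by rewrite mem_ports adj_sym -mem_ports.
Qed.

Lemma node_maj v (P : pred V) : Hn v ->
  (forall u, u \in ports G v -> P u -> 0 < g u v) ->
  (forall u, u \in ports G v -> P u -> g v u = 0) ->
  count (predC P) (ports G v) < count P (ports G v) ->
  1 + outfl v <= infl v.
Proof.
move=> Hv H1 H2 Hc. apply: leq_trans (count_le_sum H1).
apply: leq_trans Hc. rewrite add1n ltnS. apply: sum_le_count => u uin /=.
case Pu: (P u); first by rewrite H2.
by rewrite g_le1.
Qed.

Lemma ar1 a b : a + b < 2 * a -> b < a.
Proof. by rewrite mul2n -addnn ltn_add2l. Qed.
Lemma ar2 a b : odd (a + b) -> ~~ (a + b < 2 * a) -> a < b.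
Proof.
move=> Ho; rewrite -leqNgt mul2n -addnn leq_add2l => ba.
case: (ltngtP a b) => // [ab|ab]; first by move: (leq_ltn_trans ba ab); rewrite ltnn.
by move: Ho; rewrite ab addnn odd_double.
Qed.

Lemma node v : NH v + outfl v <= infl v + Delta.+1 * ~~ Dn v.
Proof.
case Dv: (Dn v); last first.
  rewrite muln1. apply: leq_trans (leq_addl _ _).
  by apply: leq_trans (leq_add (leq_b1 (NH v)) (outfl_le v)) _; rewrite add1n.
rewrite muln0 addn0.
have Hv_case := Dv. rewrite /Dn in Hv_case.
have adjE : forall u, u \in ports G v -> v \in ports G u.
  by move=> u uin; rewrite mem_ports adj_sym -mem_ports.
case Hv: (Hn v) Hv_case => Dv'.
- have -> : NH v by rewrite /NH Hv.
  have HvD : size (ports G v) = Delta by apply/eqP.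
  case Bv: (Bn v).
  + apply: (@node_maj v (out G v)) => // [u uin ovu|u uin ovu|].
    * have adjvu : adj G v u by rewrite -mem_ports.
      have ouv : out G u v = false by rewrite out_anti 1?adj_sym // ovu.
      rewrite /g Hv andbT. case Hu: (Hn u).
      - case Bu: (Bn u); first by rewrite ouv.
        by rewrite /An Hu Bu Bv ovu /= orbT.
      - by rewrite (DH_notDn uin Dv') ?Hu.
    * rewrite /g Hv /=. case Hu: (Hn u).
      - by rewrite /An Bv andbF ovu.
      - suff -> : Dn u = false by [].
        rewrite /Dn Hu; apply/negbF/hasP; exists v; [exact: adjE | exact: Dv'].
    * apply: ar1. rewrite count_predC. by move: Bv; rewrite /Bn Hv.
  + have Av : An v by rewrite /An Hv Bv.
    have nXA : ~~ XA v by case/andP: Dv'.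
    have nB : forall u, u \in ports G v -> ~~ out G v u -> Bn u = false.
      move=> u uin ovu; apply/negbTE; move: nXA; rewrite /XA Av /=.
      by apply: contra => Bu; apply/hasP; exists u => //; rewrite ovu.
    apply: (@node_maj v (predC (out G v))) => // [u uin ovu|u uin ovu|].
    * have adjvu : adj G v u by rewrite -mem_ports.
      have ouv : out G u v = true by rewrite out_anti 1?adj_sym // (negbTE ovu).
      rewrite /g Hv andbT. case Hu: (Hn u).
      - by rewrite /An Hu (nB u uin ovu) ouv.
      - by rewrite (DH_notDn uin Dv') ?Hu.
    * rewrite /g Hv /=. case Hu: (Hn u).
      - by rewrite Bv (nB u uin ovu) (negbTE ovu) !andbF.
      - suff -> : Dn u = false by [].
        rewrite /Dn Hu; apply/negbF/hasP; exists v; [exact: adjE | exact: Dv'].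
    * have E := count_predC (out G v) (ports G v).
      have -> : count (predC (predC (out G v))) (ports G v) = count (out G v) (ports G v).
        by apply: eq_count => u /=; rewrite negbK.
      apply: ar2; rewrite E HvD //.
      by move: Bv; rewrite /Bn Hv HvD /= => ->.
- have -> : outfl v = 0.
    rewrite /outfl big1_seq // => u /andP [_ uin]. rewrite /g Hv /=.
    by case: (Hn u); rewrite ?Dv.
  rewrite addn0 /NH Hv /= /infl.
  apply: leq_trans (count_le_sum (P := Hn) _).
    by case: has (has_count Hn (ports G v)) => // ->.
  by move=> u uin Hu; rewrite /g Hv Hu /= Dv.
Qed.


Lemma sum_ports v (F : V -> nat) :
  \sum_(u <- ports G v) F u = \sum_(u | adj G v u) F u.
Proof.
rewrite big_uniq ?uniq_ports //; apply: eq_bigl => u; by rewrite mem_ports.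
Qed.

Lemma sum_flow : \sum_v infl v = \sum_v outfl v.
Proof.
rewrite /infl /outfl.
under eq_bigr => v _ do rewrite sum_ports big_mkcond.
under [RHS]eq_bigr => v _ do rewrite sum_ports big_mkcond.
rewrite exchange_big /=. apply: eq_bigr => u _. apply: eq_bigr => v _.
by rewrite adj_sym.
Qed.

Lemma sum_ind (P : pred V) : \sum_v (P v : nat) = #|[set v | P v]|.
Proof.
rewrite -sum1dep_card [RHS]big_mkcond /=; apply: eq_bigr => v _; by case: (P v).
Qed.

Lemma flow : #|[set v | NH v]| <= Delta.+1 * #|~: [set v | Dn v]|.
Proof.
have S : \sum_v (NH v + outfl v) <= \sum_v (infl v + Delta.+1 * ~~ Dn v).
  by apply: leq_sum => v _; apply: node.
rewrite !big_split /= sum_flow addnC leq_add2l -big_distrr /= in S.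
rewrite sum_ind in S. move: S; rewrite sum_ind.
have -> : ~: [set v | Dn v] = [set v | ~~ Dn v] by apply/setP => v; rewrite !inE.
by [].
Qed.

Definition Nd d : {set V} := [set v | (v == d) || adj G d v].

Lemma card_Nd d : #|Nd d| = (size (ports G d)).+1.
Proof.
have -> : Nd d = d |: [set v in ports G d].
  by apply/setP => v; rewrite !inE mem_ports.
rewrite cardsU1 inE mem_ports.
have -> : adj G d d = false by case: wf => _ [H _]; apply/negbTE.
rewrite add1n; congr _.+1.
rewrite -(card_uniqP (uniq_ports d)). by apply: eq_card => v; rewrite inE.
Qed.

Definition w v := Delta.+1 - NH v.

Lemma inner d : \sum_(v in Nd d) w v <= Delta * Delta.+1.
Proof.
case Hd: (Hn d).
- rewrite (eq_bigr (fun _ => Delta)); last first.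
    move=> v; rewrite inE => /orP [/eqP -> | adv].
    + by rewrite /w /NH Hd /= subn1.
    + have : NH v by rewrite /NH; apply/orP; right; apply/hasP; exists d => //;
          rewrite mem_ports adj_sym.
      by rewrite /w => -> /=; rewrite subn1.
  rewrite sum_nat_const card_Nd mulnC. by move: Hd; rewrite /Hn => /eqP ->.
- apply: leq_trans (_ : \sum_(v in Nd d) Delta.+1 <= _).
    by apply: leq_sum => v _; rewrite /w leq_subr.
  rewrite sum_nat_const card_Nd leq_mul2r /=.
  have := size_ports d. move: Hd; rewrite /Hn. rewrite leq_eqVlt => -> /=.
  by [].
Qed.

Lemma bound (Ds : {set V}) : dominating G Ds -> #|[set v | Dn v]| <= Delta * #|Ds|.
Proof.
move=> domDs.
have S1 : \sum_v w v + #|[set v | NH v]| = Delta.+1 * #|V|.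
  rewrite -sum_ind -big_split /=.
  rewrite (eq_bigr (fun _ => Delta.+1)); last by move=> v _; rewrite /w subnK // (leq_trans (leq_b1 _)).
  by rewrite sum_nat_const mulnC cardE.
have S2 : \sum_v w v <= \sum_(d in Ds) \sum_(v in Nd d) w v.
  under [X in _ <= X]eq_bigr do rewrite big_mkcond.
  rewrite exchange_big /=. apply: leq_sum => v _.
  have [d dD vN] : exists2 d, d \in Ds & v \in Nd d.
    case: (domDs v) => [vD|[u uD adu]]; first by exists v; rewrite // inE eqxx.
    by exists u; rewrite // inE adj_sym adu orbT.
  by rewrite (bigD1 d) //= vN leq_addr.
have S3 : \sum_(d in Ds) \sum_(v in Nd d) w v <= #|Ds| * (Delta * Delta.+1).
  by rewrite -sum_nat_const; apply: leq_sum => d _; apply: inner.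
have F := flow.
have C := cardsC [set v | Dn v].
rewrite -(leq_pmul2l (ltn0Sn Delta)).
rewrite -(leq_add2r #|[set v | NH v]|).
apply: leq_trans (leq_add (leqnn _) F) _.
rewrite -mulnDr C -S1 leq_add2r.
apply: leq_trans S2 _. apply: leq_trans S3 _.
apply: eq_leq. by rewrite mulnA mulnC [#|Ds| * Delta]mulnC.
Qed.

End Alg.

Theorem theorem8 (Delta : nat) (hodd : odd Delta) :
  exists A : local_alg,
    forall (V : finType) (G : pn_graph V),
      wf_pn_graph G Delta ->
      dominating G (alg_output A G) /\
      forall Dstar : {set V}, min_dominating G Dstar ->
        #|alg_output A G| <= Delta * #|Dstar|.
Proof.
exists (Alg Delta) => V G wf. rewrite alg_outputE. split.
  exact: dom.
move=> Ds [dD _]. exact: bound.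
Qed.
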